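(* Let $U=U_1\times\cdots\times U_m\subset\mathbb{R}^m_+$ (each $U_i\subseteq\mathbb{R}$) be a convex set, $C\subseteq\mathbb{R}^m$, $\overline{U}=U\cap C$. Let $\rho_{\rm adapt}=\rho(\Pi(\overline{U}^\downarrow),\overline{U}^\downarrow)$, $\rho_{\rm aro}=\rho(U^\downarrow,\overline{U}^\downarrow)$ and $\gamma_{\rm ro}=\gamma(U^\downarrow,\Pi(\overline{U}^\downarrow))$. Then $$\rho_{\rm adapt}\ge\frac{\rho_{\rm aro}}{\gamma_{\rm ro}}.$$
   Context: For $S\subseteq\mathbb{R}^m_+$, $S^\downarrow=\{t\in\mathbb{R}^m_+:\exists s\in S,\ t\le s\text{ componentwise}\}$. $\Pi_i(S)$ is the projection of $S$ onto coordinate $i$ and $\Pi(S)=\Pi_1(S)\times\cdots\times\Pi_m(S)$. For $r\ge0$, $rS=\{rx:x\in S\}$; $\rho(S_1,S_2)=\max\{\rho\ge0:\rho S_1\subseteq S_2\}$, $\gamma(S_1,S_2)=\min\{\gamma\ge0:S_2\subseteq\gamma S_1\}$. *)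

(* Defs.v *)
From HB Require Import structures.
From mathcomp Require Import all_boot all_order all_algebra.
From mathcomp Require Import classical_sets reals.
Set Implicit Arguments. Unset Strict Implicit. Unset Printing Implicit Defensive.
Import Order.TTheory GRing.Theory Num.Theory.
Local Open Scope ring_scope.
Local Open Scope classical_set_scope.

Section Defs.
Variable R : realType.
Variable m : nat.
Notation vec := ('I_m -> R).

Definition orthant : set vec := [set x | forall i, 0 <= x i].

Definition prod_set (Us : 'I_m -> set R) : set vec := [set x | forall i, Us i (x i)].

Definition convex_set (S : set vec) : Prop :=
  forall x y (t : R), S x -> S y -> 0 <= t -> t <= 1 ->
    S (fun i => t * x i + (1 - t) * y i).

Definition down_cl (S : set vec) : set vec :=
  [set t | (forall i, 0 <= t i) /\ exists s, S s /\ forall i, t i <= s i].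

Definition proj_i (S : set vec) (i : 'I_m) : set R := [set r | exists x, S x /\ x i = r].

Definition Pi_prod (S : set vec) : set vec := [set x | forall i, proj_i S i (x i)].

Definition scale_set (r : R) (S : set vec) : set vec :=
  [set y | exists x, S x /\ (fun i => r * x i) = y].

(* admissible values whose max is rho(S1,S2), resp. whose min is gamma(S1,S2) *)
Definition rho_adm (S1 S2 : set vec) : set R := [set r | 0 <= r /\ scale_set r S1 `<=` S2].
Definition gamma_adm (S1 S2 : set vec) : set R := [set g | 0 <= g /\ S2 `<=` scale_set g S1].

End Defs.

Definition is_max (R : realType) (A : set R) (x : R) : Prop := A x /\ forall y, A y -> y <= x.
Definition is_min (R : realType) (A : set R) (x : R) : Prop := A x /\ forall y, A y -> x <= y.

(* Main.v *)
Require Import Defs.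
From HB Require Import structures.
From mathcomp Require Import all_boot all_order all_algebra.
From mathcomp Require Import boolp classical_sets reals.
Import Order.TTheory GRing.Theory Num.Theory.
Local Open Scope ring_scope.
Local Open Scope classical_set_scope.

Theorem lemma4 (R : realType) (m : nat) (Us : 'I_m -> set R) (C : set ('I_m -> R))
    (rho_adapt rho_aro gamma_ro : R) :
  prod_set Us `<=` @orthant R m ->
  convex_set (prod_set Us) ->
  is_max (rho_adm (Pi_prod (down_cl (setI (prod_set Us) C))) (down_cl (setI (prod_set Us) C))) rho_adapt ->
  is_max (rho_adm (down_cl (prod_set Us)) (down_cl (setI (prod_set Us) C))) rho_aro ->
  is_min (gamma_adm (down_cl (prod_set Us)) (Pi_prod (down_cl (setI (prod_set Us) C)))) gamma_ro ->
  rho_aro / gamma_ro <= rho_adapt.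
Proof.
move=> _ _ [[ad0 _] admax] [[ar0 Har] _] [[g0 Hg] _].
have [->|gn0] := eqVneq gamma_ro 0; first by rewrite invr0 mulr0.
apply: admax; split; first exact: divr_ge0.
move=> z [x [Dx <-]].
have [y [Dy xy]] := Hg _ Dx.
apply: Har; exists y; split => //.
apply: funext => i; rewrite -xy mulrA divfK //.
Qed.
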